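(* Let $T$ be a tree and $\alpha\ne\beta\in V(T)$, and let $\gamma_0=\alpha,\gamma_1,\dots,\gamma_{k-1},\gamma_k=\beta$ be the successive vertices of the unique minimal path in $T$ from $\alpha$ to $\beta$. Then inside $\mathsf L_T$, the Euclidean spaces $\mathsf L_T(\alpha)$ and $\mathsf L_T(\beta)$ are glued along closed quadrants, where a point $\{x_\gamma(\alpha)\}$ of $\mathsf L_T(\alpha)$ is identified with a point $\{x_\gamma(\beta)\}$ of $\mathsf L_T(\beta)$ whenever $$x_{\gamma_1}(\alpha)=x_\alpha(\beta),\ x_{\gamma_2}(\alpha)=x_{\gamma_1}(\beta),\ \dots,\ x_{\gamma_{k-1}}(\alpha)=x_{\gamma_{k-2}}(\beta),\ x_\beta(\alpha)=x_{\gamma_{k-1}}(\beta)\ge0,$$ and $x_\gamma(\alpha)=x_\gamma(\beta)$ for all $\gamma\notin\{\alpha,\gamma_1,\dots,\gamma_{k-1},\beta\}$.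
   Context: A tree is a nonempty finite connected acyclic graph with vertex set $V(T)$ and edge set $E(T)$ (two-element subsets of $V(T)$). Arboreal singularity: for $\alpha\in V(T)$ let $\mathsf L_T(\alpha)=\mathbb R^{V(T)\setminus\{\alpha\}}$ with coordinates $x_\gamma(\alpha)$, $\gamma\ne\alpha$; $\mathsf L_T$ is the quotient of $\coprod_{\alpha\in V(T)}\mathsf L_T(\alpha)$ by the equivalence relation generated by the $\{\alpha,\beta\}$-edge gluings, for $\{\alpha,\beta\}\in E(T)$: $\{x_\gamma(\alpha)\}\sim\{x_\gamma(\beta)\}$ whenever $x_\beta(\alpha)=x_\alpha(\beta)\ge0$ and $x_\gamma(\alpha)=x_\gamma(\beta)$ for all $\gamma\ne\alpha,\beta$. *)

(* Defs.v *)
From mathcomp Require Import all_boot.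
From Stdlib Require Import Reals.
From Stdlib Require Relations.
Set Implicit Arguments. Unset Strict Implicit. Unset Printing Implicit Defensive.

Definition simple_graph (V : finType) (e : rel V) : Prop :=
  symmetric e /\ irreflexive e.

Definition is_tree (V : finType) (e : rel V) : Prop :=
  [/\ simple_graph e,
      (0 < #|V|)%N,
      (forall x y : V, connect e x y) &
      (forall (x : V) (s : seq V),
          uniq (x :: s) -> (2 <= size s)%N -> path e x s -> ~~ e (last x s) x)].

(* s = [:: g_1; ...; g_k] such that a = g_0, g_1, ..., g_k = b is a path of
   minimal length from a to b. *)
Definition is_min_path (V : finType) (e : rel V) (a b : V) (s : seq V) : Prop :=
  [/\ path e a s, last a s = b &
      forall s' : seq V, path e a s' -> last a s' = b -> (size s <= size s')%N].

(* Chart L_T(a) = R^(V \ {a}) ; points of the disjoint union. *)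
Definition chart (V : finType) (a : V) : Type := {v : V | v != a} -> R.
Definition Lpt (V : finType) : Type := {a : V & chart a}.

(* coordinate x_g(a) of x : chart a, for g != a (value 0 at g = a, unused). *)
Definition coord (V : finType) (a : V) (x : chart a) (g : V) : R :=
  match insub g with Some u => x u | None => 0%R end.

Definition edge_glue (V : finType) (e : rel V) (p q : Lpt V) : Prop :=
  let: existT a x := p in let: existT b y := q in
  [/\ e a b, coord x b = coord y a, (0 <= coord x b)%R &
      forall g : V, g != a -> g != b -> coord x g = coord y g].

(* The equivalence relation generated by the edge gluings; L_T is the
   quotient of Lpt V by it. *)
Definition Lequiv (V : finType) (e : rel V) : Lpt V -> Lpt V -> Prop :=
  Relation_Operators.clos_refl_sym_trans (Lpt V) (@edge_glue V e).

Definition pt (V : finType) (a : V) (x : chart a) : Lpt V :=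
  existT (fun c => chart c) a x.

(* Main.v *)
Require Import Defs.
From mathcomp Require Import all_boot.
From Stdlib Require Import Reals.
From Stdlib Require Relations.
From Stdlib Require Import FunctionalExtensionality.
Set Implicit Arguments. Unset Strict Implicit.

Section Tree.
Variables (V : finType) (e : rel V) (hT : is_tree e) (b : V).

Lemma esym : symmetric e. Proof. by case: hT => [[]]. Qed.
Lemma eirr : irreflexive e. Proof. by case: hT => [[]]. Qed.

Definition dpath (c : V) (n : nat) : bool :=
  [exists t : n.-tuple V, path e c t && (last c t == b)].

Lemma dpathP c n : dpath c n <-> exists s, [/\ path e c s, last c s = b & size s = n].
Proof.
split.
  by case/existsP => t /andP[hp /eqP hl]; exists t; rewrite size_tuple.
move=> [s [hp hl hs]]; subst n; apply/existsP; exists (in_tuple s).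
by rewrite /= hp hl eqxx.
Qed.

Lemma ex_dpath c : exists n, dpath c n.
Proof.
case: hT => _ _ hc _; case/connectP: (hc c b) => s hp hl.
by exists (size s); apply/dpathP; exists s.
Qed.

Definition dist c := ex_minn (ex_dpath c).

Lemma dist_spec c : dpath c (dist c).
Proof. by rewrite /dist; case: ex_minnP. Qed.

Lemma dist_le c n : dpath c n -> (dist c <= n)%N.
Proof. by rewrite /dist; case: ex_minnP => m _ H /H. Qed.

Lemma dist_b : dist b = 0%N.
Proof. apply/eqP; rewrite -leqn0; apply: dist_le; apply/dpathP; by exists [::]. Qed.

Lemma dist0 c : dist c = 0%N -> c = b.
Proof.
move=> h; have /dpathP [s [_ hl hs]] := dist_spec c.
by rewrite h in hs; case: s hs hl => //.
Qed.

Lemma dist_edge c d : e c d -> (dist c <= (dist d).+1)%N.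
Proof.
move=> hcd; have /dpathP [s [hp hl hs]] := dist_spec d.
apply: dist_le; apply/dpathP; exists (d :: s); by rewrite /= hcd hp hl hs.
Qed.

Lemma dist_down c : c != b -> exists d, e c d && (dist d < dist c)%N.
Proof.
move=> hcb; have /dpathP [s [hp hl hs]] := dist_spec c.
case: s hp hl hs => [|d s] /=; first by move=> _ hl; rewrite hl eqxx in hcb.
move=> /andP[hcd hp] hl hs; exists d; rewrite hcd /= -hs ltnS.
by apply: dist_le; apply/dpathP; exists s.
Qed.

Definition next c := odflt c [pick d | e c d && (dist d < dist c)%N].

Lemma next_spec c : c != b -> e c (next c) /\ (dist (next c) < dist c)%N.
Proof.
move=> hcb; rewrite /next; case: pickP => [d /andP[]//|H].
by case: (dist_down hcb) => d; rewrite H.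
Qed.

Lemma dist_next c : c != b -> dist c = (dist (next c)).+1.
Proof.
move=> hcb; case: (next_spec hcb) => h1 h2.
by apply/eqP; rewrite eqn_leq dist_edge.
Qed.

Lemma notin_dist z l k : all (fun y => (k < dist y)%N) l -> (dist z <= k)%N -> z \notin l.
Proof.
move=> hall hk; apply/negP => hz; move/allP: hall => /(_ z hz).
by rewrite ltnNge hk.
Qed.

Lemma nocyc n : forall u v w0, dist u = n -> dist v = n -> u != v ->
  all (fun z => (n < dist z)%N) w0 -> uniq (v :: w0) -> path e v (rcons w0 u) -> False.
Proof.
elim: n => [|n IH] u v w0 hu hv huv hall hun hp.
  by rewrite (dist0 hu) (dist0 hv) eqxx in huv.
have hub : u != b by apply/eqP => h; rewrite h dist_b in hu.
have hvb : v != b by apply/eqP => h; rewrite h dist_b in hv.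
have [eu _] := next_spec hub; have [ev _] := next_spec hvb.
have du : dist (next u) = n by move: (dist_next hub); rewrite hu => -[].
have dv : dist (next v) = n by move: (dist_next hvb); rewrite hv => -[].
move: hun; rewrite /= => /andP[vw0 uw0].
have hall' : all (fun z => (n < dist z)%N) w0.
  by apply/allP => z /(allP hall) /ltnW.
have uw : u \notin w0 by apply: notin_dist hall _; rewrite hu.
case: (hT) => _ _ _ hac.
case: (eqVneq (next u) (next v)) => hnn.
  have := hac (next u) (v :: rcons w0 u).
  have -> : last (next u) (v :: rcons w0 u) = u by rewrite /= last_rcons.
  rewrite eu /= => H; suff: false by []; apply: H.
  - have nv : next u != v by apply/eqP => h; move: du; rewrite h hv => /eqP; rewrite gtn_eqF.
    have nu : next u != u by apply/eqP => h; move: du; rewrite h hu => /eqP; rewrite gtn_eqF.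
    have nw : next u \notin w0 by apply: notin_dist hall' _; rewrite du.
    have nr : next u \notin rcons w0 u by rewrite mem_rcons inE negb_or nu nw.
    have vr : v \notin rcons w0 u by rewrite mem_rcons inE negb_or (eq_sym v) huv vw0.
    by rewrite /= inE negb_or nv nr vr rcons_uniq uw uw0.
  - by rewrite size_rcons.
  - by rewrite hnn esym ev.
apply: (IH (next u) (next v) (v :: rcons w0 u) du dv hnn).
- rewrite /= all_rcons hv hu ltnSn /=; exact: hall'.
- have nv : next v != v by apply/eqP => h; move: dv; rewrite h hv => /eqP; rewrite gtn_eqF.
  have nu : next v != u by apply/eqP => h; move: dv; rewrite h hu => /eqP; rewrite gtn_eqF.
  have nw : next v \notin w0 by apply: notin_dist hall' _; rewrite dv.
  have nr : next v \notin rcons w0 u by rewrite mem_rcons inE negb_or nu nw.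
  have vr : v \notin rcons w0 u by rewrite mem_rcons inE negb_or (eq_sym v) huv vw0.
  by rewrite /= inE negb_or nv nr vr rcons_uniq uw uw0.
- by rewrite rcons_path /= last_rcons esym ev hp eu.
Qed.

Lemma next_uniq c d : e c d -> (dist d < dist c)%N -> next c = d.
Proof.
move=> hcd hlt.
have hcb : c != b by apply/eqP => h; rewrite h dist_b in hlt.
have [ec lt'] := next_spec hcb.
have hd : dist d = (dist c).-1.
  by have := dist_edge hcd; move: hlt; case: (dist c) => // k; rewrite !ltnS => h1 h2; apply/eqP; rewrite eqn_leq h1 h2.
have hd' : dist (next c) = (dist c).-1.
  by have := dist_edge ec; move: lt'; case: (dist c) => // k; rewrite !ltnS => h1 h2; apply/eqP; rewrite eqn_leq h1 h2.
apply/eqP; apply/negPn/negP => hne; apply: (@nocyc (dist d) d (next c) [:: c]) => //.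
- by rewrite hd'.
- by rewrite eq_sym.
- by rewrite /= andbT hd; move: hlt; case: (dist c).
- rewrite /= inE andbT; apply/eqP => h; move: lt'; by rewrite h ltnn.
- by rewrite /= esym ec hcd.
Qed.

Lemma edge_neq c d : e c d -> dist c != dist d.
Proof.
move=> hcd; apply/negP => /eqP h.
apply: (@nocyc (dist c) d c [::] (sym_eq h) erefl).
- by apply/eqP => h'; rewrite h' eirr in hcd.
- by [].
- by [].
- by rewrite /= hcd.
Qed.

Lemma edge_cases c d : e c d ->
  (c != b /\ next c = d) \/ (d != b /\ next d = c).
Proof.
move=> hcd; have := edge_neq hcd; rewrite neq_ltn => /orP[] h.
  right; split; last by apply: next_uniq => //; rewrite esym.
  by apply/eqP => h'; rewrite h' dist_b in h.
left; split; last by apply: next_uniq.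
by apply/eqP => h'; rewrite h' dist_b in h.
Qed.

Definition move (c d : V) (f : V -> R) : V -> R :=
  fun g => if g == d then 0%R else if g == c then f d else f g.

Fixpoint NFf (n : nat) (c : V) (f : V -> R) : V -> R :=
  match n with 0 => f | n'.+1 => NFf n' (next c) (move c (next c) f) end.
Fixpoint NFok (n : nat) (c : V) (f : V -> R) : Prop :=
  match n with 0 => True
  | n'.+1 => (0 <= f (next c))%R /\ NFok n' (next c) (move c (next c) f) end.
Definition NF c f := NFf (dist c) c f.
Definition OK c f := NFok (dist c) c f.

Lemma NF_step c f : c != b ->
  NF c f = NF (next c) (move c (next c) f) /\
  (OK c f <-> (0 <= f (next c))%R /\ OK (next c) (move c (next c) f)).
Proof. by move=> hcb; rewrite /NF /OK (dist_next hcb). Qed.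

Lemma NF_b f : NF b f = f /\ OK b f.
Proof. by rewrite /NF /OK dist_b. Qed.

Lemma move_back c d f : c != d -> f c = 0%R -> move d c (move c d f) = f.
Proof.
move=> hcd hc; apply: functional_extensionality => g; rewrite /move.
case: (eqVneq g c) => [->|hgc]; first by rewrite hc.
by case: (eqVneq g d) => [->|] //; rewrite eqxx (negbTE hcd).
Qed.

Lemma NF_edge c d f : e c d -> f c = 0%R -> (0 <= f d)%R ->
  NF c f = NF d (move c d f) /\ (OK c f <-> OK d (move c d f)).
Proof.
move=> hcd hc hd.
have hne : c != d by apply/eqP => h; rewrite h eirr in hcd.
case: (edge_cases hcd) => [[hcb hn]|[hdb hn]].
  have [E1 E2] := NF_step f hcb; rewrite hn in E1 E2.
  by rewrite E1; split => //; rewrite E2; tauto.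
have [E1 E2] := NF_step (move c d f) hdb; rewrite hn move_back // in E1 E2.
rewrite E1; split => //; rewrite E2.
have -> : move c d f c = f d by rewrite /move (negbTE hne) eqxx.
tauto.
Qed.

Lemma minpath_dist c s : is_min_path e c b s -> dist c = size s.
Proof.
case=> hp hl hmin; apply/eqP; rewrite eqn_leq; apply/andP; split.
  by apply: dist_le; apply/dpathP; exists s.
have /dpathP [s' [hp' hl' hs']] := dist_spec c.
by rewrite -hs'; apply: hmin.
Qed.

Lemma minpath_tail c d s : is_min_path e c b (d :: s) -> e c d /\ is_min_path e d b s.
Proof.
case=> /= /andP[hcd hp] hl hmin; split => //; split => // s' hp' hl'.
by have := hmin (d :: s'); rewrite /= hcd hp' ltnS; apply.
Qed.

Lemma minpath_all c s : is_min_path e c b s -> all (fun z => (dist z < dist c)%N) s.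
Proof.
elim: s c => [|d s IH] c hs //=.
have [hcd hs'] := minpath_tail hs.
have h1 := minpath_dist hs; have h2 := minpath_dist hs'.
by rewrite h1 h2 ltnSn /=; apply/allP => z /(allP (IH _ hs')); rewrite h2 ltnS => /ltnW.
Qed.

Lemma minpath_notin c s : is_min_path e c b s -> c \notin s.
Proof.
move=> hs; apply/negP => hc; have := allP (minpath_all hs) _ hc.
by rewrite ltnn.
Qed.

Lemma NF_path s : forall c f, is_min_path e c b s -> f c = 0%R ->
 [/\ forall i, (i < size s)%N -> NF c f (nth c (c :: s) i) = f (nth c s i),
     NF c f b = 0%R,
     forall w, w \notin c :: s -> NF c f w = f w
   & OK c f <-> forall i, (i < size s)%N -> (0 <= f (nth c s i))%R].
Proof.
elim: s => [|d s IH] c f hs hc.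
  case: hs => _ /= hl _; subst c; have [E1 E2] := NF_b f.
  by rewrite E1; split => //; split.
have [hcd hs'] := minpath_tail hs.
have hlt : (dist d < dist c)%N by rewrite (minpath_dist hs) (minpath_dist hs').
have hn := next_uniq hcd hlt.
have hcb : c != b by apply/eqP => h; rewrite h dist_b in hlt.
have hcn := minpath_notin hs; have hdn := minpath_notin hs'.
have hcd' : c != d by move: hcn; rewrite inE negb_or => /andP[].
have hcs : c \notin s by move: hcn; rewrite inE negb_or => /andP[].
have [E1 E2] := NF_step f hcb; rewrite hn in E1 E2.
set f' := move c d f.
have f'd : f' d = 0%R by rewrite /f' /move eqxx.
have f'c : f' c = f d by rewrite /f' /move (negbTE hcd') eqxx.
have f'o : forall w, w != c -> w != d -> f' w = f w.
  by move=> w h1 h2; rewrite /f' /move (negbTE h1) (negbTE h2).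
have [I1 I2 I3 I4] := IH d f' hs' f'd.
rewrite E1; split => //.
- case=> [|j] /= hj; first by rewrite I3 // inE negb_or eq_sym hcd'.
  rewrite -/f' [nth c (d :: s) j](set_nth_default d) ?(ltnW hj) // I1 //.
  have hm : nth d s j \in s by apply: mem_nth.
  rewrite f'o; first by rewrite (set_nth_default d).
  + by apply/eqP => h; rewrite -h hm in hcs.
  + by apply/eqP => h; rewrite -h hm in hdn.
- move=> w; rewrite inE negb_or => /andP[hwc hw]; rewrite I3 // f'o //.
  by move: hw; rewrite inE negb_or => /andP[].
- rewrite E2 I4; split.
    move=> [h0 h] [|j] /= hj //; have := h j hj.
    have hm : nth d s j \in s by apply: mem_nth.
    rewrite f'o; first by rewrite (set_nth_default d).
    + by apply/eqP => h'; rewrite -h' hm in hcs.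
    + by apply/eqP => h'; rewrite -h' hm in hdn.
  move=> h; split; first by apply: (h 0%N).
  move=> j hj; have := h j.+1 hj; rewrite /=.
  have hm : nth d s j \in s by apply: mem_nth.
  rewrite f'o; first by rewrite (set_nth_default d).
  + by apply/eqP => h'; rewrite -h' hm in hcs.
  + by apply/eqP => h'; rewrite -h' hm in hdn.
Qed.

Definition mk (c : V) (f : V -> R) : Lpt V := existT (fun c => chart c) c (fun u : {v : V | v != c} => f (val u)).

Lemma coord_mk c f g : g != c -> coord (projT2 (mk c f)) g = f g.
Proof.
move=> hg; rewrite /coord /=; case: insubP => [u _ hu|]; first by rewrite hu.
by rewrite hg.
Qed.

Lemma coord_hole (c : V) (x : chart c) : coord x c = 0%R.
Proof. by rewrite /coord; case: insubP => [u|] //=; rewrite eqxx. Qed.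

Lemma pt_mk (c : V) (x : chart c) : pt x = mk c (coord x).
Proof.
rewrite /pt /mk; f_equal; apply: functional_extensionality => u.
by rewrite /coord valK.
Qed.

Lemma glue_move (p q : Lpt V) : edge_glue e p q ->
  e (projT1 p) (projT1 q) /\
  coord (projT2 q) = move (projT1 p) (projT1 q) (coord (projT2 p)) /\
  (0 <= coord (projT2 p) (projT1 q))%R.
Proof.
case: p => a x; case: q => d y /= [had hxy hpos hoth]; split => //; split => //.
apply: functional_extensionality => g; rewrite /move.
case: (eqVneq g d) => [->|hgd]; first exact: coord_hole.
case: (eqVneq g a) => [->|hga]; first by rewrite hxy.
by rewrite hoth.
Qed.

Lemma Lequiv_inv p q : Lequiv e p q ->
  NF (projT1 p) (coord (projT2 p)) = NF (projT1 q) (coord (projT2 q)) /\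
  (OK (projT1 p) (coord (projT2 p)) <-> OK (projT1 q) (coord (projT2 q))).
Proof.
elim=> [p0 q0 h | p0 | p0 q0 _ [I1 I2] | p0 q0 r0 _ [I1 I2] _ [J1 J2]].
- have [h1 [h2 h3]] := glue_move h; rewrite h2.
  by apply: NF_edge => //; case: (p0) => a x; apply: coord_hole.
- by [].
- by rewrite I1; split => //; tauto.
- by rewrite I1 J1; split => //; tauto.
Qed.

Lemma reach n : forall c f, dist c = n -> OK c f -> Lequiv e (mk c f) (mk b (NF c f)).
Proof.
elim: n => [|n IH] c f hd hok.
  have hcb := dist0 hd; subst c; rewrite (NF_b f).1; exact: Relation_Operators.rst_refl.
have hcb : c != b by apply/eqP => h; rewrite h dist_b in hd.
have [E1 E2] := NF_step f hcb; have [hok1 hok2] := E2.1 hok.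
have [ec _] := next_spec hcb.
have hne : c != next c by apply/eqP => h; rewrite -h eirr in ec.
apply: (@Relation_Operators.rst_trans _ _ _ (mk (next c) (move c (next c) f))).
  apply: Relation_Operators.rst_step.
  have C1 := @coord_mk c f; have C2 := @coord_mk (next c) (move c (next c) f).
  move: C1 C2; rewrite /edge_glue /mk /= => C1 C2.
  rewrite C1 1?eq_sym // C2 //; split => //.
  - by rewrite /move (negbTE hne) eqxx.
  - move=> g h1 h2; rewrite C1 // C2 //.
    by rewrite /move (negbTE h1) (negbTE h2).
rewrite E1; apply: IH => //.
by move: (dist_next hcb); rewrite hd => -[].
Qed.
End Tree.

Theorem lemma2p6 (V : finType) (e : rel V) (hT : is_tree e) (a b : V)
  (hab : a != b) (s : seq V) (hs : is_min_path e a b s)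
  (x : chart a) (y : chart b) :
  Lequiv e (pt x) (pt y) <->
  ((forall i : nat, (i < size s)%N ->
       coord x (nth a s i) = coord y (nth a (a :: s) i) /\
       (0 <= coord x (nth a s i))%R) /\
   (forall g : V, g \notin a :: s -> coord x g = coord y g)).
Proof.
have fa : coord x a = 0%R by apply: coord_hole.
have gb : coord y b = 0%R by apply: coord_hole.
have [H1 H2 H3 H4] := NF_path hT hs fa.
have [N1 N2] := NF_b hT b (coord y).
split.
- move=> /(Lequiv_inv hT b) /= [E1 E2]; rewrite N1 in E1.
  have hok : OK hT b a (coord x) by apply/E2.
  split.
    by move=> i hi; rewrite -E1 H1 //; split => //; apply: (H4.1 hok).
  by move=> g hg; rewrite -E1 H3.
- move=> [C1 C2].
  have hNF : NF hT b a (coord x) = coord y.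
    apply: functional_extensionality => w.
    case: (boolP (w \in a :: s)) => hw; last by rewrite H3 // C2.
    have hw' := nth_index a hw.
    have : (index w (a :: s) < (size s).+1)%N by rewrite -[(size s).+1]/(size (a :: s)) index_mem.
    rewrite ltnS leq_eqVlt => /orP[/eqP hi|hi].
      have hwb : w = b by rewrite -hw' hi -last_nth; case: hs.
      by rewrite hwb H2 gb.
    by rewrite -hw' H1 // (C1 _ hi).1.
  have hok : OK hT b a (coord x) by apply/H4 => i hi; apply: (C1 i hi).2.
  have := @reach V e hT b _ a (coord x) (erefl _) hok.
  by rewrite hNF -!pt_mk.
Qed.
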